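(* Let $n\ge 2$. For $\vec{x}=(x_1,\dots,x_n)\in\{0,1\}^n$ and $\vec{a}=(a_1,\dots,a_n)\in\{0,1\}^n$, define the $n$-partite Popescu–Rohrlich box $P^{PR}_n(\vec a\mid\vec x)=2^{-(n-1)}$ if $\bigoplus_i a_i=\prod_i x_i$ and $0$ otherwise, the even-parity box $P^c_n(\vec a\mid \vec x)=2^{-(n-1)}$ if $\bigoplus_i a_i=0$ and $0$ otherwise, and for $0\le\varepsilon\le 1$ the correlated non-local box $P^{PR}_{n,\varepsilon}=\varepsilon P^{PR}_n+(1-\varepsilon)P^c_n$. Consider the following generalized Brunner–Skrzypczyk (BS) protocol acting on two independent copies of an $n$-partite box shared by $n$ parties: party $i$ inputs $x_i$ into the first box and receives $a_i$; party $i$ then inputs $y_i=x_i\cdot(1\oplus a_i)$ into the second box and receives $b_i$; party $i$ outputs $c_i=a_i\oplus b_i$. The resulting map $\vec x\mapsto\vec c$ defines a new $n$-partite box. Then: (1) for every $0<\varepsilon<1$, applying the generalized BS protocol to two copies of $P^{PR}_{n,\varepsilon}$ yields a box $P^{PR}_{n,\varepsilon'}$ with $\varepsilon'>\varepsilon$; (2) for every $\varepsilon>0$, iterating the protocol (applying it to $2^m$ copies of $P^{PR}_{n,\varepsilon}$ recursively, pairing up the boxes obtained at each level) yields boxes $P^{PR}_{n,\varepsilon_m}$ with $\varepsilon_m\to 1$ as $m\to\infty$, i.e. $P^{PR}_{n,\varepsilon}$ is distilled arbitrarily closely to $P^{PR}_n$.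
   Context: An $n$-partite box is a conditional probability distribution $P(\vec a\mid \vec x)$ with $n$ binary inputs and $n$ binary outputs, party $i$ holding input $x_i$ and output $a_i$; boxes used in a protocol are independent copies, and inputs to the second box may depend on the outputs of the first box at the same party (local wiring). *)

(* Defs.v *)
From HB Require Import structures.
From mathcomp Require Import all_boot all_order all_algebra.
From mathcomp Require Import all_classical all_reals all_analysis.
Unset Printing Implicit Defensive.
Import Order.TTheory GRing.Theory Num.Theory.
Local Open Scope ring_scope.

Definition bvec (n : nat) := {ffun 'I_n -> bool}.

(* An n-partite box: P a x = P(a | x), outputs a, inputs x. *)
Definition box (R : realType) (n : nat) := bvec n -> bvec n -> R.

Definition parity {n} (a : bvec n) : bool := \big[addb/false]_(i < n) a i.
Definition allprod {n} (x : bvec n) : bool := [forall i, x i].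

Definition PR_box {R : realType} {n : nat} : box R n :=
  fun a x => if parity a == allprod x then ((2 ^+ (n.-1))%:R : R)^-1 else 0.

Definition even_box {R : realType} {n : nat} : box R n :=
  fun a x => if parity a == false then ((2 ^+ (n.-1))%:R : R)^-1 else 0.

Definition PR_eps {R : realType} {n : nat} (eps : R) : box R n :=
  fun a x => eps * PR_box a x + (1 - eps) * even_box a x.

Definition BS {R : realType} {n : nat} (P1 P2 : box R n) : box R n :=
  fun c x =>
    \sum_(a : bvec n) \sum_(b : bvec n)
      (if c == [ffun i => a i (+) b i] then
         P1 a x * P2 b [ffun i => x i && ~~ a i]
       else 0).

(* Level-m box from 2^m copies of P, pairing identical boxes at each level. *)
Definition BS_iter {R : realType} {n : nat} (P : box R n) (m : nat) : box R n :=
  iter m (fun Q => BS Q Q) P.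

(* Main.v *)
Require Import Defs.
From HB Require Import structures.
From mathcomp Require Import all_boot all_order all_algebra.
From mathcomp Require Import all_classical all_reals all_analysis.
From mathcomp Require Import ring lra.
Import Order.TTheory GRing.Theory Num.Theory numFieldNormedType.Exports.
Local Open Scope classical_set_scope.
Local Open Scope ring_scope.

Definition bxor {n} (a b : bvec n) : bvec n := [ffun i => a i (+) b i].

Lemma parity_xor n (a b : bvec n) : parity (bxor a b) = parity a (+) parity b.
Proof.
rewrite /parity /bxor; under eq_bigr do rewrite ffunE; exact: big_split.
Qed.

Lemma bxor_eq n (a b c : bvec n) : (c == bxor a b) = (b == bxor a c).
Proof.
apply/eqP/eqP => ->; apply/ffunP => i; rewrite !ffunE;
  by case: (a i); case: (b i) => //; case: (c i).
Qed.

Lemma BS_E (R : realType) n (P : box R n) c x :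
  BS P P c x = \sum_a P a x * P (bxor a c) [ffun i => x i && ~~ a i].
Proof.
rewrite /BS; apply: eq_bigr => a _.
rewrite (eq_bigr (fun b => if b == bxor a c then
  P a x * P b [ffun i => x i && ~~ a i] else 0)); last first.
  by move=> b _; rewrite -bxor_eq.
by rewrite -big_mkcond big_pred1_eq.
Qed.

Section Cnt.
Variables (R : realType) (n : nat).
Hypothesis n0 : (0 < n)%N.

Lemma sum_par (u v : R) :
  \sum_(a : bvec n) (if parity a then u else v) = (2 ^+ n.-1)%:R * (u + v).
Proof.
pose i0 : 'I_n := Ordinal n0.
pose d : bvec n := [ffun i => i == i0].
have pd : parity d = true.
  rewrite /parity (bigD1 i0) //= big1 ?ffunE ?eqxx // => i /negbTE.
  by rewrite ffunE => ->.
set S := \sum_a _.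
have S2 : S = \sum_(a : bvec n) (if parity a then v else u).
  have inj : injective (bxor d).
    move=> a b /ffunP H; apply/ffunP => i; move: (H i); rewrite /bxor !ffunE.
    by move/(congr1 (addb (i == i0))); rewrite !addKb.
  rewrite /S (reindex_inj inj).
  by apply: eq_bigr => a _; rewrite parity_xor pd; case: (parity a).
have S3 : S + S = (2 ^+ n)%:R * (u + v).
  rewrite {2}S2 -big_split /=.
  rewrite (eq_bigr (fun _ => u + v)); last by move=> a _; case: (parity a) => //; rewrite addrC.
  rewrite sumr_const card_ffun card_bool card_ord mulr_natl.
  by rewrite -mulr_natl natrX.
have e : (2 ^+ n)%:R = 2 * (2 ^+ n.-1)%:R :> R.
  by rewrite -(prednK n0) natrX exprS natrX.
rewrite e in S3.
apply: (@mulfI _ 2); first by rewrite pnatr_eq0.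
by rewrite mulrA -S3; ring.
Qed.
End Cnt.

Lemma PR_eps_E (R : realType) n (e : R) (b y : bvec n) :
  PR_eps e b y = ((2 ^+ n.-1)%:R)^-1 *
    (if parity b then (if allprod y then e else 0)
     else if allprod y then 1 - e else 1) :> R.
Proof.
rewrite /PR_eps /PR_box /even_box.
by case: (parity b); case: (allprod y) => /=; ring.
Qed.

Lemma allprod_y0 n (x a : bvec n) : allprod x = false ->
  allprod [ffun i => x i && ~~ a i] = false.
Proof.
move=> /negbT /forallPn [i Hi]; apply/negbTE/forallPn; exists i.
by rewrite ffunE (negbTE Hi).
Qed.

Lemma allprod_y1 n (x a : bvec n) : allprod x = true ->
  allprod [ffun i => x i && ~~ a i] = (a == [ffun=> false]).
Proof.
move=> /forallP Hx; apply/forallP/eqP => [H|->].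
  by apply/ffunP => i; move: (H i); rewrite !ffunE Hx; case: (a i).
by move=> i; rewrite !ffunE Hx.
Qed.

Lemma parity0 n : parity ([ffun=> false] : bvec n) = false.
Proof. by rewrite /parity big1 // => i _; rewrite ffunE. Qed.

Definition fe (R : realType) (n : nat) (e : R) : R := e + e * (1 - e) / (2 ^+ n.-1)%:R.

Lemma BS_PR (R : realType) n (n0 : (0 < n)%N) (e : R) c x :
  BS (@PR_eps R n e) (PR_eps e) c x = PR_eps (@fe R n e) c x.
Proof.
rewrite BS_E PR_eps_E /fe.
have N0 : (2 ^+ n.-1)%:R != 0 :> R by rewrite pnatr_eq0 expn_eq0.
under eq_bigr do rewrite !PR_eps_E parity_xor.
case Hx: (allprod x).
  under eq_bigr do rewrite allprod_y1 //.
  rewrite (bigD1 [ffun=> false]) //= parity0 eqxx.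
  set N := (2 ^+ n.-1)%:R : R.
  set z : bvec n := [ffun=> false].
  pose G (a : bvec n) := N^-1 * (if parity a then e else 1 - e) *
     (N^-1 * (if parity a (+) parity c then 0 else 1)).
  rewrite (eq_bigr G); last by move=> a /negbTE ->.
  have -> : \sum_(a | a != z) G a = \sum_a G a - G z.
    by rewrite [X in _ = X - _](bigD1 z) //= addrC addrK.
  rewrite /G parity0 /=.
  case: (parity c) => /=.
    rewrite (eq_bigr (fun a => if parity a then N^-1 * e * N^-1 else 0)); last first.
      by move=> a _; case: (parity a) => /=; ring.
    rewrite sum_par //; rewrite -/N; field; exact: N0.
  rewrite (eq_bigr (fun a => if parity a then 0 else N^-1 * (1 - e) * N^-1)); last first.
    by move=> a _; case: (parity a) => /=; ring.
  rewrite sum_par //; rewrite -/N; field; exact: N0.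
under eq_bigr do rewrite allprod_y0 //.
case: (parity c).
  rewrite (eq_bigr (fun a => if parity a then 0 else 0)); last first.
    by move=> a _; case: (parity a) => /=; ring.
  rewrite sum_par //; ring.
rewrite (eq_bigr (fun a => if parity a then 0 else (2 ^+ n.-1)%:R^-1 * (2 ^+ n.-1)%:R^-1)); last first.
  by move=> a _; case: (parity a) => /=; ring.
rewrite sum_par //; field; exact: N0.
Qed.

Lemma BS_ext (R : realType) n (P Q : box R n) : P =2 Q -> BS P P =2 BS Q Q.
Proof.
move=> H c x; rewrite /BS; apply: eq_bigr => a _; apply: eq_bigr => b _.
by rewrite !H.
Qed.

Theorem theorem1 (R : realType) (n : nat) (hn : (2 <= n)%N) :
  (forall eps : R, 0 < eps < 1 ->
     exists eps' : R, [/\ eps < eps', eps' <= 1 &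
       BS (@PR_eps R n eps) (@PR_eps R n eps) =2 @PR_eps R n eps'])
  /\
  (forall eps : R, 0 < eps <= 1 ->
     exists epsm : nat -> R,
       [/\ (forall m, 0 <= epsm m <= 1),
           (forall m, BS_iter (@PR_eps R n eps) m =2 @PR_eps R n (epsm m)) &
           epsm m @[m --> \oo] --> (1 : R)]).
Proof.
have n0 : (0 < n)%N by apply: leq_trans hn.
set N := (2 ^+ n.-1)%:R : R.
have N1 : 1 <= N by rewrite /N ler1n expn_gt0.
have K0 : 0 < N^-1 by rewrite invr_gt0; apply: lt_le_trans N1.
have K1 : N^-1 <= 1 by rewrite invf_le1 // (lt_le_trans _ N1).
have feE : forall e : R, @fe R n e = e + e * (1 - e) * N^-1 by [].
have fe_up : forall e : R, 0 <= e <= 1 -> e <= @fe R n e <= 1.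
  move=> e /andP[e0 e1]; rewrite feE.
  have h1 : e * N^-1 <= 1 by nra.
  have h2 : 0 <= e * (1 - e) * N^-1.
    by apply: mulr_ge0 => //; [apply: mulr_ge0 => //; lra | lra].
  have h3 : 0 <= (1 - e) * (1 - e * N^-1).
    by apply: mulr_ge0; lra.
  apply/andP; split; first lra.
  have -> : e + e * (1 - e) * N^-1 = 1 - (1 - e) * (1 - e * N^-1) by ring.
  lra.
split.
  move=> eps /andP[e0 e1]; exists (@fe R n eps); split.
  - rewrite feE; have : 0 < eps * (1 - eps) * N^-1.
      by apply: mulr_gt0 => //; apply: mulr_gt0 => //; rewrite subr_gt0.
    lra.
  - have h : 0 <= eps <= 1 by apply/andP; split; lra.
    by case/andP: (fe_up eps h).
  - by move=> c x; rewrite BS_PR.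
move=> eps /andP[e0 e1].
pose em m := iter m (@fe R n) eps.
have emb : forall m, eps <= em m <= 1.
  elim=> [|m /andP[IH1 IH2]]; first by rewrite /= lexx e1.
  rewrite /em iterS -/(em m).
  have /andP[h1 h2] := fe_up (em m) (ltac:(apply/andP; split; lra)).
  apply/andP; split; lra.
set q := 1 - eps * N^-1.
have q0 : 0 <= q < 1.
  rewrite /q; have : 0 < eps * N^-1 by apply: mulr_gt0.
  have : eps * N^-1 <= 1 by nra.
  move=> *; apply/andP; split; lra.
have decay : forall m, 1 - em m <= (1 - eps) * q ^+ m.
  elim=> [|m IH]; first by rewrite /= expr0 mulr1.
  rewrite /em iterS -/(em m) feE exprS.
  have /andP[h1 h2] := emb m.
  have hq : 1 - em m * N^-1 <= q by rewrite /q; nra.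
  have hq2 : 0 <= 1 - em m * N^-1 by nra.
  have : (1 - em m) * (1 - em m * N^-1) <= (1 - eps) * q ^+ m * q.
    apply: (@le_trans _ _ ((1 - em m) * q)).
      by apply: ler_wpM2l => //; lra.
    by apply: ler_wpM2r => //; case/andP: q0.
  nra.
exists em; split.
- by move=> m; have /andP[h1 h2] := emb m; apply/andP; split => //; lra.
- elim=> [|m IH] c x; first by [].
  rewrite /BS_iter iterS -/(BS_iter _ m) (@BS_ext _ _ _ _ IH) BS_PR //.
- apply: (@squeeze_cvgr _ _ _ _ (fun m => 1 - (1 - eps) * q ^+ m) (cst 1)).
  + apply: nearW => m; have /andP[h1 h2] := emb m; have := decay m.
    move=> hd; apply/andP; split => /=; lra.
  + rewrite -[X in _ --> X]subr0; apply: cvgB; first exact: cvg_cst.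
    rewrite -(mulr0 (1 - eps)); apply: cvgMr.
    by apply: cvg_expr; case/andP: q0 => qa qb; rewrite ger0_norm.
  + exact: cvg_cst.
Qed.
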